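(* Let $\alpha,\beta,\gamma,x$ be real numbers and $\lambda$ a nonnegative integer. For all nonnegative integers $n$, $$A_{n}^{\lambda,x}(\alpha,\beta,\gamma)=(-1)^{n}\sum_{k=0}^{n}\binom{k+\lambda-1}{k}(-\beta)^{k}k!\,S(n,k,\alpha,\beta,\beta\lambda-\gamma)\,(x+1)^{k}.$$
   Context: For a number $t$ and $\alpha$, the generalised factorial is $(t|\alpha)_n=\prod_{j=0}^{n-1}(t-j\alpha)$ for $n\ge 1$ and $(t|\alpha)_0=1$. For parameters $\alpha,\beta,\gamma$, the generalised Stirling numbers $S(n,k,\alpha,\beta,\gamma)$ ($0\le k\le n$) are defined by the polynomial identity $(t|\alpha)_n=\sum_{k=0}^{n}S(n,k,\alpha,\beta,\gamma)\,(t-\gamma|\beta)_k$ in the variable $t$. For a nonnegative integer $\lambda$ put $\binom{k+\lambda-1}{k}=\lambda(\lambda+1)\cdots(\lambda+k-1)/k!$ (equal to $1$ for $k=0$). Define $$A^{\lambda,x}_n(\alpha,\beta,\gamma)=\sum_{k=0}^{n}\binom{k+\lambda-1}{k}(-1)^{n+k}\beta^k k!\,S(n,k,\alpha,-\beta,-\gamma)\,x^k .$$ *)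

(* Defs.v *)
From HB Require Import structures.
From mathcomp Require Import all_boot all_order all_algebra.
From mathcomp Require Import reals.
Set Implicit Arguments. Unset Strict Implicit. Unset Printing Implicit Defensive.
Import Order.TTheory GRing.Theory Num.Theory.
Local Open Scope ring_scope.

Definition gfact (R : comNzRingType) (t : {poly R}) (a : R) (n : nat) : {poly R} :=
  \prod_(j < n) (t - (j%:R * a)%:P).

(* S is the family of generalised Stirling numbers: for all parameters a b c
   and all n, (t|a)_n = sum_{k=0}^n S n k a b c (t - c | b)_k as polynomials in t. *)
Definition gen_stirling (R : comNzRingType) (S : nat -> nat -> R -> R -> R -> R) : Prop :=
  forall (n : nat) (a b c : R),
    gfact 'X a n = \sum_(k < n.+1) S n k a b c *: gfact ('X - c%:P) b k.

(* binom(k + lam - 1, k) := lam (lam+1) ... (lam+k-1) / k! *)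
Definition risebin (R : fieldType) (lam k : nat) : R :=
  (\prod_(i < k) (lam + i)%:R) / (k`!)%:R.

Definition Apoly (R : fieldType) (S : nat -> nat -> R -> R -> R -> R)
  (lam : nat) (x : R) (n : nat) (a b c : R) : R :=
  \sum_(k < n.+1) risebin R lam k * (-1) ^+ (n + k) * b ^+ k * (k`!)%:R
                  * S n k a (- b) (- c) * x ^+ k.

(* Main.v *)
Require Import Defs.
From HB Require Import structures.
From mathcomp Require Import all_boot all_order all_algebra.
From mathcomp Require Import reals.
From mathcomp Require Import ring zify.
Set Warnings "-notation-overridden,-ambiguous-paths".
Set Implicit Arguments. Unset Strict Implicit.
Import Order.TTheory GRing.Theory Num.Theory.
Local Open Scope ring_scope.
Definition ff (A : comNzRingType) (z h : A) (k : nat) : A :=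
  \prod_(i < k) (z - i%:R * h).

Lemma ffS (A : comNzRingType) (z h : A) k : ff z h k.+1 = ff z h k * (z - k%:R * h).
Proof. by rewrite /ff big_ord_recr. Qed.

Lemma ff0 (A : comNzRingType) (z h : A) : ff z h 0 = 1.
Proof. by rewrite /ff big_ord0. Qed.

Lemma vdm (A : comNzRingType) (z w h : A) k :
  ff (z + w) h k = \sum_(j < k.+1) 'C(k, j)%:R * ff z h j * ff w h (k - j).
Proof.
elim: k => [|k IH].
  by rewrite big_ord1 !ff0 bin0 !mulr1.
rewrite ffS IH big_distrl /=.
rewrite (eq_bigr (fun i : 'I_k.+1 => 'C(k, i)%:R * ff z h i.+1 * ff w h (k - i)
            + 'C(k, i)%:R * ff z h i * ff w h (k.+1 - i))); last first.
  move=> i _; have hi : (i <= k)%N by rewrite -ltnS.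
  rewrite ffS subSn // ffS natrB //; ring.
rewrite big_split /=; apply/esym; rewrite big_ord_recl /= bin0 subn0.
rewrite (eq_bigr (fun i : 'I_k.+1 => 'C(k, i.+1)%:R * ff z h i.+1 * ff w h (k - i)
            + 'C(k, i)%:R * ff z h i.+1 * ff w h (k - i))); last first.
  by move=> i _; rewrite /bump /= add1n binS natrD subSS; ring.
rewrite big_split /= addrA [RHS]addrC; congr (_ + _).
rewrite [RHS]big_ord_recl big_ord_recr /= bin0 bin_small // subn0 mulr0n !mul0r addr0.

congr (_ + _); apply: eq_bigr => i _; by rewrite /= subSS.
Qed.

Lemma prodN (A : comNzRingType) k (F : nat -> A) :
  \prod_(i < k) - F i = (-1) ^+ k * \prod_(i < k) F i.
Proof.
elim: k => [|k IH]; first by rewrite !big_ord0 mulr1.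
by rewrite !big_ord_recr /= IH exprS; ring.
Qed.

Lemma ff_rev (A : comNzRingType) (u h : A) k :
  ff (- u + (k.-1)%:R * h) h k = (-1) ^+ k * ff u h k.
Proof.
rewrite /ff -(prodN k (fun i => u - i%:R * h)).
rewrite -(big_mkord xpredT (fun i => - u + (k.-1)%:R * h - i%:R * h)) big_rev_mkord subn0.
apply: eq_bigr => i _.
have hi : (i < k)%N by [].
have -> : (k - i.+1)%N = (k.-1 - i)%N by lia.
rewrite natrB; last by lia.
ring.
Qed.

Lemma ff_neg (A : comNzRingType) (u h : A) k :
  ff (- u) h k = (-1) ^+ k * ff u (- h) k.
Proof. rewrite /ff -(prodN k (fun i => u - i%:R * - h)); apply: eq_bigr => i _; ring. Qed.
Lemma gfact_ff (R : comNzRingType) (t : {poly R}) a n : gfact t a n = ff t a%:P n.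
Proof. by apply: eq_bigr => i _; rewrite polyCM polyC_natr. Qed.

Lemma ff_rev' (A : comNzRingType) (u h : A) k :
  ff u h k = (-1) ^+ k * ff (- u + (k.-1)%:R * h) h k.
Proof. by rewrite ff_rev mulrA -exprD addnn -mul2n exprM expr2 mulrNN mulr1 expr1n mul1r. Qed.

Lemma KQ (R : fieldType) (b c : R) lam k :
 gfact ('X - (b * lam%:R - c)%:P) b k =
 \sum_(j < k.+1) ((-1) ^+ (k + j) * 'C(k, j)%:R *
     \prod_(i < k - j) ((lam + (k - i.+1))%:R * b)) *: gfact ('X - (- c)%:P) (- b) j.
Proof.
rewrite gfact_ff; under eq_bigr do rewrite gfact_ff.
rewrite ff_rev'.
have -> : - ('X - (b * lam%:R - c)%:P) + (k.-1)%:R * b%:P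
          = - ('X - (- c)%:P) + ((lam + k.-1)%:R * b)%:P :> {poly R}.
  have e1 : (b * lam%:R - c)%:P = b%:P * lam%:R - c%:P.
    by rewrite polyCB polyCM polyC_natr.
  have e2 : ((lam + k.-1)%:R * b)%:P = (lam + k.-1)%:R * b%:P.
    by rewrite polyCM polyC_natr.
  rewrite e1 e2 polyCN natrD; ring.
rewrite vdm big_distrr /=; apply: eq_bigr => j _.
rewrite ff_neg -polyCN.
have -> : ff ((lam + k.-1)%:R * b)%:P b%:P (k - j)
        = (\prod_(i < k - j) ((lam + (k - i.+1))%:R * b))%:P.
  rewrite /ff rmorph_prod; apply: eq_bigr => i _.
  have hi : (i < k - j)%N by [].
  have -> : (lam + (k - i.+1))%N = (lam + k.-1 - i)%N by lia.
  rewrite natrB; last by lia.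
  by rewrite ?rmorphB ?rmorphM ?rmorph_nat; ring.
rewrite -!mul_polyC !polyCM !polyC_natr polyC_exp !polyCN polyC1 exprD; ring.
Qed.

Lemma gfact_XsubC (R : comNzRingType) (c a : R) j :
  gfact ('X - c%:P) a j = \prod_(i < j) ('X - (c + i%:R * a)%:P).
Proof. by apply: eq_bigr => i _; rewrite polyCD opprD addrA. Qed.

Lemma size_gfact (R : comNzRingType) (c a : R) j : size (gfact ('X - c%:P) a j) = j.+1.
Proof. by rewrite gfact_XsubC size_prod_XsubC -[index_enum _]enumT size_enum_ord. Qed.

Lemma coef_gfact (R : comNzRingType) (c a : R) j : (gfact ('X - c%:P) a j)`_j = 1.
Proof.
have := monic_prod_XsubC (index_enum 'I_j) xpredT (fun i : 'I_j => c + i%:R * a).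
rewrite -gfact_XsubC => /monicP; rewrite lead_coefE size_gfact //.
Qed.

Lemma uniq_coord (R : comNzRingType) (P : nat -> {poly R})
  (hs : forall j, size (P j) = j.+1) (hc : forall j, (P j)`_j = 1) N (u v : nat -> R) :
  \sum_(j < N) u j *: P j = \sum_(j < N) v j *: P j -> forall j, (j < N)%N -> u j = v j.
Proof.
elim: N => [|N IH] H j hj; first by [].
have key : forall w : nat -> R, (\sum_(i < N.+1) w i *: P i)`_N = w N.
  move=> w; rewrite coef_sum big_ord_recr /= coefZ hc mulr1 big1 ?add0r //.
  move=> i _; rewrite coefZ nth_default ?mulr0 // hs; exact: ltn_ord.
have eN : u N = v N by rewrite -(key u) -(key v) H.
move: H; rewrite !big_ord_recr /= eN => /addIr H.
move: hj; rewrite ltnS leq_eqVlt => /orP [/eqP -> //|hj].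
exact: IH.
Qed.
Lemma prodMr (A : comNzRingType) m (F : nat -> A) y :
  \prod_(i < m) (F i * y) = \prod_(i < m) F i * y ^+ m.
Proof.
elim: m => [|m IH]; first by rewrite !big_ord0 mulr1.
by rewrite !big_ord_recr /= IH exprS; ring.
Qed.

Definition rho (A : comNzRingType) lam k : A := \prod_(i < k) (lam + i)%:R.

Lemma rho_split (A : comNzRingType) lam j k : (j <= k)%N ->
  rho A lam j * \prod_(i < k - j) (lam + (k - i.+1))%:R = rho A lam k.
Proof.
move=> hjk; rewrite /rho.
rewrite -(big_rev_mkord _ _ j k xpredT (fun i => ((lam + i)%:R : A))).
rewrite -!(big_mkord xpredT (fun i => ((lam + i)%:R : A))).
by rewrite -big_cat_nat.
Qed.

Lemma sum_widen (V : zmodType) k n (F : nat -> V) : (k <= n)%N ->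
  (forall j, (k < j)%N -> F j = 0) ->
  \sum_(j < k.+1) F j = \sum_(j < n.+1) F j.
Proof.
move=> hkn hF; rewrite (big_ord_widen n.+1 F) ?ltnS // big_mkcond.
apply: eq_bigr => i _; case: ifP => // /negbT; rewrite -leqNgt => h.
by rewrite hF.
Qed.

Definition mco (R : comNzRingType) lam (b : R) k j : R :=
  (-1) ^+ (k + j) * 'C(k, j)%:R * \prod_(i < k - j) ((lam + (k - i.+1))%:R * b).

Lemma mco0 (R : comNzRingType) lam (b : R) k j : (k < j)%N -> mco lam b k j = 0.
Proof. by move=> h; rewrite /mco bin_small // mulr0 mul0r. Qed.

Lemma inner (R : numFieldType) (b x : R) lam n k : (k <= n)%N ->
  \sum_(j < n.+1) mco lam b k j *
     (risebin R lam j * (-1) ^+ (n + j) * b ^+ j * (j`!)%:R * x ^+ j)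
  = (-1) ^+ n * (rho R lam k * (- b) ^+ k * (x + 1) ^+ k).
Proof.
move=> hkn.
rewrite -(@sum_widen _ k n (fun j => mco lam b k j *
     (risebin R lam j * (-1) ^+ (n + j) * b ^+ j * (j`!)%:R * x ^+ j))) //; last first.
  by move=> j hj; rewrite mco0 ?mul0r.
rewrite addrC exprDn big_distrr big_distrr /=; apply: eq_bigr => j _.
have hj : (j <= k)%N by rewrite -ltnS.
rewrite expr1n mul1r -[x ^+ j *+ _]mulr_natr /mco /risebin (prodMr (k - j) (fun i => (lam + (k - i.+1))%:R)).
rewrite -(rho_split R lam hj) /rho.
set rj := \prod_(i < j) _.
set pk := \prod_(i < k - j) _.
have hf : (j`!)%:R != 0 :> R by rewrite pnatr_eq0 -lt0n fact_gt0.
have ss : (-1) ^+ j * (-1) ^+ j = 1 :> R.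
  by rewrite -exprD addnn -mul2n exprM expr2 mulrNN mulr1 expr1n.
have hb : b ^+ k = b ^+ (k - j) * b ^+ j by rewrite -exprD subnK.
rewrite [(- b) ^+ k]exprNn hb !exprD.
rewrite [LHS](_ : _ = ((-1) ^+ j * (-1) ^+ j) * ((-1) ^+ k * 'C(k, j)%:R * pk * b ^+ (k - j)
    * (rj / (j`!)%:R * (j`!)%:R) * (-1) ^+ n * b ^+ j * x ^+ j)); last by ring.
rewrite ss mul1r divfK //; ring.
Qed.

Lemma KQ' (R : fieldType) (b c : R) lam k :
 gfact ('X - (b * lam%:R - c)%:P) b k =
 \sum_(j < k.+1) mco lam b k j *: gfact ('X - (- c)%:P) (- b) j.
Proof. exact: KQ. Qed.

Lemma rho_risebin (R : numFieldType) lam k : rho R lam k = risebin R lam k * (k`!)%:R.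
Proof.
have hf : (k`!)%:R != 0 :> R by rewrite pnatr_eq0 -lt0n fact_gt0.
by rewrite /risebin divfK.
Qed.

Unset Implicit Arguments.
Theorem theorem11 (R : realType) (S : nat -> nat -> R -> R -> R -> R)
  (hS : gen_stirling S) (a b c x : R) (lam : nat) :
  forall n : nat,
    Apoly S lam x n a b c =
    (-1) ^+ n * \sum_(k < n.+1) risebin R lam k * (- b) ^+ k * (k`!)%:R
                  * S n k a b (b * lam%:R - c) * (x + 1) ^+ k.
Proof.
move=> n.
have H1 := hS n a (-b) (-c).
have H2 := hS n a b (b * lam%:R - c).
have E : \sum_(j < n.+1) S n j a (-b) (-c) *: gfact ('X - (- c)%:P) (- b) j
       = \sum_(j < n.+1) (\sum_(k < n.+1) S n k a b (b * lam%:R - c) * mco lam b k j)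
             *: gfact ('X - (- c)%:P) (- b) j.
  rewrite -H1 H2.
  rewrite (eq_bigr (fun k : 'I_n.+1 => \sum_(j < n.+1)
     (S n k a b (b * lam%:R - c) * mco lam b k j) *: gfact ('X - (- c)%:P) (- b) j)); last first.
    move=> k _; rewrite KQ' (@sum_widen _ k n (fun j => mco lam b k j *: gfact ('X - (- c)%:P) (- b) j)); last first.
    - by move=> j hj; rewrite mco0 // scale0r.
    - by rewrite -ltnS.
    by rewrite scaler_sumr; apply: eq_bigr => j _; rewrite scalerA.
  by rewrite exchange_big /=; apply: eq_bigr => j _; rewrite scaler_suml.
have hc := uniq_coord (P := fun j => gfact ('X - (- c)%:P) (- b) j)
   (@size_gfact R (-c) (-b)) (@coef_gfact R (-c) (-b)) (N := n.+1)
   (u := fun j => S n j a (-b) (-c))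
   (v := fun j => \sum_(k < n.+1) S n k a b (b * lam%:R - c) * mco lam b k j) E.
rewrite /Apoly.
rewrite (eq_bigr (fun j : 'I_n.+1 => \sum_(k < n.+1) S n k a b (b * lam%:R - c) *
   (mco lam b k j * (risebin R lam j * (-1) ^+ (n + j) * b ^+ j * (j`!)%:R * x ^+ j)))); last first.
  move=> j _; rewrite (hc j (ltn_ord j)) big_distrr /= big_distrl /=.
  by apply: eq_bigr => k _; ring.
rewrite exchange_big /= big_distrr /=; apply: eq_bigr => k _.
rewrite -big_distrr /= inner; last by rewrite -ltnS.
rewrite rho_risebin; ring.
Qed.
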